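(* An operator $\Lambda$ satisfies balanced treatment and non-arbitrariness if and only if $\Lambda$ is the historical operator $\Phi$, i.e., for every standard rule $R$, every historical claims problem $(N,c,E,h)$ and every $i\in N$, $$\Lambda_i(R)(N,c,E,h)=\min\{c_i,R_i(N,\widetilde{c},E)+\lambda\},$$ where $\lambda\in\mathbb{R}_+$ is such that $\sum_{i\in N}\min\{c_i,R_i(N,\widetilde{c},E)+\lambda\}=E$.
   Context: Agents are elements of $\mathbb{N}$; $N$ denotes a nonempty finite subset of $\mathbb{N}$. A (standard) claims problem is a triple $(N,c,E)$ with $c\in\mathbb{R}_+^N$, $E\in\mathbb{R}_+$, $C=\sum_{i\in N}c_i>0$ and $E\le C$. An allocation for it is $x\in\mathbb{R}^N$ with $0\le x_i\le c_i$ for all $i$ and $\sum_ix_i=E$. A standard rule $R$ assigns to each standard claims problem an allocation $R(N,c,E)$; $\mathcal{R}$ is the set of standard rules. A history for $N$ is a finite sequence $h=\{(c^{(t)},x^{(t)})\}_{t=1}^{|T|}$ where for each $t$, $c^{(t)}\in\mathbb{R}_+^N$ and $x^{(t)}$ is an allocation of $(N,c^{(t)},\sum_ix^{(t)}_i)$. A historical claims problem is $(N,c,E,h)$ with $(N,c,E)$ a standard claims problem and $h$ a history for $N$; its allocations are the allocations of $(N,c,E)$. A general rule assigns to each historical claims problem an allocation. An operator $\Lambda$ assigns to each standard rule $R$ a general rule $\Lambda(R)$. The history-adjusted claims are $\widetilde{c}_i=c_i+\sum_t(c^{(t)}_i-x^{(t)}_i)$. (A $\lambda\ge0$ as in the claim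 always exists, and the resulting vector does not depend on which such $\lambda$ is chosen, so the historical operator $\Phi$ is well defined.) Axioms on operators (required for every $R\in\mathcal{R}$ and every historical problem $(N,c,E,h)$): Balanced treatment: for each $i,j\in N$ with $\Lambda_i(R)(N,c,E,h)<c_i$ and $\Lambda_j(R)(N,c,E,h)<c_j$, $\Lambda_i(R)(N,c,E,h)-R_i(N,\widetilde{c},E)=\Lambda_j(R)(N,c,E,h)-R_j(N,\widetilde{c},E)$. Non-arbitrariness: for each $i\in N$ with $\Lambda_i(R)(N,c,E,h)=c_i$ and $R_i(N,\widetilde{c},E)<c_i$, we have $\Lambda_i(R)(N,c,E,h)-R_i(N,\widetilde{c},E)\le\Lambda_j(R)(N,c,E,h)-R_j(N,\widetilde{c},E)$ for all $j\in N$ with $\Lambda_j(R)(N,c,E,h)<c_j$. *)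

(* Defs.v *)
From HB Require Import structures.
From mathcomp Require Import all_boot all_order all_algebra.
From mathcomp Require Import finmap.
From mathcomp Require Import reals.
Set Implicit Arguments. Unset Strict Implicit. Unset Printing Implicit Defensive.
Import Order.TTheory GRing.Theory Num.Theory.
Local Open Scope ring_scope.

Section ClaimsDefs.
Variable R : realType.

Definition vec (N : {fset nat}) := {ffun N -> R}.

Definition total (N : {fset nat}) (v : vec N) : R := \sum_(i : N) v i.

Definition is_problem (N : {fset nat}) (c : vec N) (E : R) : Prop :=
  N != fset0 /\ (forall i, 0 <= c i) /\ 0 <= E /\ 0 < total c /\ E <= total c.

Definition is_allocation (N : {fset nat}) (c : vec N) (E : R) (x : vec N) : Prop :=
  (forall i, 0 <= x i /\ x i <= c i) /\ total x = E.

Definition history (N : {fset nat}) := seq (vec N * vec N).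

(* h is a history for N: each period (c^t, x^t) has c^t ≥ 0 and x^t an
   allocation of the claims problem (N, c^t, Σ x^t) *)
Definition is_history (N : {fset nat}) (h : history N) : Prop :=
  forall p, p \in h -> is_problem p.1 (total p.2) /\ is_allocation p.1 (total p.2) p.2.

Definition is_hproblem (N : {fset nat}) (c : vec N) (E : R) (h : history N) : Prop :=
  is_problem c E /\ is_history h.

Definition adj_claims (N : {fset nat}) (c : vec N) (h : history N) : vec N :=
  [ffun i => c i + \sum_(p <- h) (p.1 i - p.2 i)].

Definition std_rule_fun := forall N : {fset nat}, vec N -> R -> vec N.
Definition gen_rule_fun := forall N : {fset nat}, vec N -> R -> history N -> vec N.

Definition is_std_rule (Rl : std_rule_fun) : Prop :=
  forall N (c : vec N) E, is_problem c E -> is_allocation c E (Rl N c E).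

Definition is_gen_rule (G : gen_rule_fun) : Prop :=
  forall N (c : vec N) E (h : history N), is_hproblem c E h ->
    is_allocation c E (G N c E h).

Definition operator := std_rule_fun -> gen_rule_fun.

Definition is_operator (L : operator) : Prop :=
  forall Rl, is_std_rule Rl -> is_gen_rule (L Rl).

Definition balanced_treatment (L : operator) : Prop :=
  forall Rl, is_std_rule Rl ->
  forall N (c : vec N) E (h : history N), is_hproblem c E h ->
  let x := L Rl N c E h in
  let r := Rl N (adj_claims c h) E in
  forall i j, x i < c i -> x j < c j -> x i - r i = x j - r j.

Definition non_arbitrariness (L : operator) : Prop :=
  forall Rl, is_std_rule Rl ->
  forall N (c : vec N) E (h : history N), is_hproblem c E h ->
  let x := L Rl N c E h in
  let r := Rl N (adj_claims c h) E in
  forall i, x i = c i -> r i < c i ->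
  forall j, x j < c j -> x i - r i <= x j - r j.

Definition is_historical_operator (L : operator) : Prop :=
  forall Rl, is_std_rule Rl ->
  forall N (c : vec N) E (h : history N), is_hproblem c E h ->
  let r := Rl N (adj_claims c h) E in
  exists lam : R, 0 <= lam /\
    \sum_(i : N) Num.min (c i) (r i + lam) = E /\
    forall i, L Rl N c E h i = Num.min (c i) (r i + lam).

End ClaimsDefs.

(* Main.v *)
Require Import Defs.
From HB Require Import structures.
From mathcomp Require Import all_boot all_order all_algebra.
From mathcomp Require Import finmap.
From mathcomp Require Import reals.
From mathcomp Require Import lra.
Import Order.TTheory GRing.Theory Num.Theory.
Local Open Scope ring_scope.

Lemma adj_problem (R : realType) (N : {fset nat}) (c : vec R N) E (h : history R N) :
  is_hproblem c E h -> is_problem (adj_claims c h) E.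
Proof.
move=> [[N0 [c0 [E0 [tc Etc]]]] Hh].
have ge : forall i, c i <= adj_claims c h i.
  move=> i; rewrite /adj_claims ffunE lerDl big_seq sumr_ge0 // => p /Hh [_ [/(_ i) [_ ?] _]].
  by rewrite subr_ge0.
have tle : Defs.total c <= Defs.total (adj_claims c h) by rewrite /Defs.total; apply: ler_sum => i _; exact: ge.
split=> //; split; first by move=> i; apply: le_trans (ge i).
split=> //; split; [exact: lt_le_trans tle| exact: le_trans tle].
Qed.

Lemma minlt (R : realType) (a b : R) : Num.min a b < a -> Num.min a b = b.
Proof. rewrite minEle. by case: (leP a b) => H; rewrite ?ltxx. Qed.
Lemma mineq (R : realType) (a b : R) : Num.min a b = a -> a <= b.
Proof. rewrite minEle. by case: (leP a b) => H // e; move: H; rewrite e ltxx. Qed.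
Lemma minr' (R : realType) (a b : R) : b <= a -> Num.min a b = b.
Proof. rewrite minEle; case: (leP a b) => H //; by move=> ?; apply: le_anti; rewrite H. Qed.
Lemma minl' (R : realType) (a b : R) : a <= b -> Num.min a b = a.
Proof. by rewrite minEle => ->. Qed.

Arguments minlt {R a b}.
Arguments mineq {R a b}.

Theorem theorem3 (R : realType) (L : operator R) (HL : is_operator L) :
  (balanced_treatment L /\ non_arbitrariness L) <-> is_historical_operator L.
Proof.
split.
- move=> [BT NA] Rl HR N c E h Hp /=.
  have [Hx Sx] := HL Rl HR N c E h Hp.
  have [Hr Sr] := HR _ _ _ (@adj_problem _ _ _ _ _ Hp).
  have BT' := BT Rl HR N c E h Hp; have NA' := NA Rl HR N c E h Hp.
  rewrite /= in BT' NA'.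
  set x := L Rl N c E h in Hx Sx BT' NA' *.
  set r := Rl N (adj_claims c h) E in Hr Sr BT' NA' *.
  case: (boolP [exists j, x j < c j]) => [/existsP [j Hj] | Hall].
  + set lam := x j - r j.
    have lam0 : 0 <= lam.
      rewrite leNgt; apply/negP => lt0.
      have H : forall i, x i - r i <= 0.
        move=> i; case: (ltP (x i) (c i)) => Hi.
          by rewrite (BT' i j Hi Hj) ltW.
        have xc : x i = c i by apply/le_anti; rewrite Hi (proj2 (Hx i)).
        case: (ltP (r i) (c i)) => Hri.
          by apply: le_trans (NA' i xc Hri j Hj) (ltW lt0).
        by rewrite xc subr_le0.
      have : \sum_(i : N) (x i - r i) < 0.
        rewrite (bigD1 j) //=; apply: (@le_lt_trans _ _ (lam + 0)); last by rewrite addr0.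
        rewrite lerD2l; apply: sumr_le0 => i _; exact: H.
      by rewrite sumrB -/(Defs.total x) -/(Defs.total r) Sx Sr subrr ltxx.
    have pt : forall i, x i = Num.min (c i) (r i + lam).
      move=> i; case: (ltP (x i) (c i)) => Hi.
        have e : x i = r i + lam by rewrite /lam -(BT' i j Hi Hj); lra.
        by rewrite minr' -e // ltW.
      have xc : x i = c i by apply/le_anti; rewrite Hi (proj2 (Hx i)).
      rewrite minl' -?xc //; case: (ltP (r i) (c i)) => Hri.
        have := NA' i xc Hri j Hj; rewrite -/lam; lra.
      lra.
    exists lam; split=> //; split=> //.
    by rewrite -Sx /Defs.total; apply: eq_bigr => i _; rewrite pt.
  + have xc : forall i, x i = c i.
      move=> i; apply/le_anti; rewrite (proj2 (Hx i)) /= leNgt.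
      by apply/negP => Hi; move/negP: Hall; apply; apply/existsP; exists i.
    have Ec : E = Defs.total c by rewrite -Sx /Defs.total; apply: eq_bigr => i _; rewrite xc.
    have c0 := proj1 (proj2 (proj1 Hp)).
    have ci : forall i, c i <= Defs.total c.
      move=> i; rewrite /Defs.total (bigD1 i) //= lerDl; exact: sumr_ge0.
    have pt : forall i, Num.min (c i) (r i + Defs.total c) = c i.
      move=> i; rewrite minl' //; have := proj1 (Hr i); have := ci i; lra.
    exists (Defs.total c); split; first by apply: sumr_ge0.
    split; first by rewrite Ec /Defs.total; apply: eq_bigr => i _; rewrite pt.
    by move=> i; rewrite pt xc.
- move=> HH; split.
  + move=> Rl HR N c E h Hp /= i j.
    have [lam [l0 [_ Hx]]] := HH Rl HR N c E h Hp.
    rewrite !Hx => /minlt -> /minlt ->; lra.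
  + move=> Rl HR N c E h Hp /= i.
    have [lam [l0 [_ Hx]]] := HH Rl HR N c E h Hp.
    rewrite !Hx => e _ j; rewrite !Hx => /minlt ->.
    have := mineq e; lra.
Qed.
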